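(* Let $T$ be a normal spanning tree of a connected graph $G$ with $n$ vertices and $m$ edges. Then $\mathcal{T}_G=\bigsqcup_{r\in\mathbb{I}^{m-n+1}}\mathcal{A}_T(r)$, where $\bigsqcup$ denotes disjoint union (each $\mathcal{A}_T(r)$ is nonempty and the sets $\mathcal{A}_T(r)$ are pairwise disjoint).
   Context: Graphs are finite, simple and undirected. $\mathbb{T}=\{z\in\mathbb{C}:|z|=1\}$, $\mathbb{I}=[0,2\pi)$. A $\mathbb{T}$-gain on $G$ is a map $\varphi$ from oriented edges to $\mathbb{T}$ with $\varphi(\overrightarrow{e_{ts}})=\varphi(\overrightarrow{e_{st}})^{-1}$; $\mathcal{T}_G$ is the set of all $\mathbb{T}$-gain graphs $(G,\varphi)$ on $G$. The gain of a directed cycle is the product of gains of its oriented edges. A rooted spanning tree $T$ with root $v_r$ induces the tree order ($v_x\le v_y$ iff $v_x$ is on the $T$-path from $v_r$ to $v_y$); $T$ is normal if adjacent vertices of $G$ are always comparable. The suitably oriented graph $\overrightarrow{G_T}$ orients each edge $e_{st}$ with $v_s\le v_t$ as $\overrightarrow{e_{st}}$ if $e_{st}\in E(T)$ and as $\overrightarrow{e_{ts}}$ otherwise; the $m-n+1$ fundamental cycles of $T$ become directed cycles $\overrightarrow{C_j(T)}$ in $\overrightarrow{G_T}$ (in a fixed order). For $r=(c_1,\dots,c_{m-n+1})\in\mathbb{I}^{m-n+1}$, $\mathcal{A}_T(r)=\{(G,\varphi)\in\mathcal{T}_G:\varphi(\overrightarrow{C_j(T)})=e^{ic_j},\ j=1,\dots,m-n+1\}$.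 *)

(* Defs.v *)
From HB Require Import structures.
From mathcomp Require Import all_boot all_order all_algebra.
From mathcomp Require Import complex.
From mathcomp Require Import reals trigo.
Set Implicit Arguments.
Unset Strict Implicit.
Unset Printing Implicit Defensive.
Import Order.TTheory GRing.Theory Num.Theory.
Local Open Scope ring_scope.

Section Graphs.
Variable V : finType.

Definition simple_graph (adj : rel V) := symmetric adj /\ irreflexive adj.

Definition connected_graph (adj : rel V) := forall x y : V, connect adj x y.

Definition nverts := #|V|.
Definition edge_set (adj : rel V) : {set {set V}} :=
  [set [set p.1; p.2] | p : V * V & adj p.1 p.2].
Definition nedges (adj : rel V) := #|edge_set adj|.

(** cyclomatic number m - n + 1 (written m + 1 - n to avoid truncation) *)
Definition cyclo_num (adj : rel V) := ((nedges adj).+1 - nverts)%N.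

Definition acyclic (tr : rel V) :=
  forall c : seq V, (2 < size c)%N -> uniq c -> ~~ cycle tr c.

Definition spanning_tree (adj tr : rel V) :=
  [/\ symmetric tr, subrel tr adj, (forall x y : V, connect tr x y) & acyclic tr].

Definition tpath (tr : rel V) (x : V) (p : seq V) (y : V) :=
  [/\ path tr x p, last x p = y & uniq (x :: p)].

Definition tree_le (tr : rel V) (root x y : V) :=
  exists p, tpath tr root p y /\ x \in root :: p.

Definition normal_tree (adj tr : rel V) (root : V) :=
  forall x y, adj x y -> tree_le tr root x y \/ tree_le tr root y x.

(** oriented non-tree edges (s,t) with s <= t; each corresponds to one
    fundamental cycle of T *)
Definition fund_edge (adj tr : rel V) (root : V) (p : V * V) :=
  [/\ adj p.1 p.2, ~~ tr p.1 p.2 & tree_le tr root p.1 p.2].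
End Graphs.

Section Gains.
Variable R : realType.
Variable V : finType.
Local Notation C := R[i].

(** A T-gain graph on G: phi s t is the gain of the oriented edge e_st.
    Maps on oriented edges are represented by total functions normalised
    to 1 on non-adjacent pairs. *)
Definition is_gain (adj : rel V) (phi : V -> V -> C) :=
  (forall s t, adj s t -> `|phi s t| = 1) /\
  (forall s t, adj s t -> phi t s = (phi s t)^-1) /\
  (forall s t, ~~ adj s t -> phi s t = 1).

Definition walk_gain (phi : V -> V -> C) (x : V) (p : seq V) : C :=
  \prod_(e <- zip (x :: p) p) phi e.1 e.2.

(** gain of the directed fundamental cycle of the non-tree edge (s,t),
    s <= t, in the suitably oriented graph: down the tree path from s to t,
    then back along the non-tree edge oriented t -> s. *)
Definition fund_cycle_gain (tr : rel V) (phi : V -> V -> C) (s t : V) (g : C) :=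
  forall p, tpath tr s p t -> walk_gain phi s p * phi t s = g.

Definition expi (c : R) : C := (cos c +i* sin c)%C.

Definition in_I (c : R) := 0 <= c < 2 * pi.

Definition in_A (tr : rel V) (k : nat) (cyc : 'I_k -> V * V)
    (phi : V -> V -> C) (r : {ffun 'I_k -> R}) :=
  forall j : 'I_k, fund_cycle_gain tr phi (cyc j).1 (cyc j).2 (expi (r j)).
End Gains.

(* Main.v *)
Require Import Defs.
From HB Require Import structures.
From mathcomp Require Import all_boot all_order all_algebra.
From mathcomp Require Import complex.
From mathcomp Require Import reals trigo.
From mathcomp Require Import zify lra.
Set Implicit Arguments. Unset Strict Implicit. Unset Printing Implicit Defensive.
Import Order.TTheory GRing.Theory Num.Theory.
Local Open Scope ring_scope.

Section G.
Variables (V : finType) (e : rel V).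
Hypothesis esym : symmetric e.
Hypothesis eac : acyclic e.

Lemma cyc_contra x P z P2 Q Q2 :
  path e x (rcons P z ++ P2) -> path e x (Q ++ z :: Q2) ->
  uniq (x :: rcons P z ++ P2) -> uniq (x :: Q ++ z :: Q2) ->
  ~~ has (mem (Q ++ z :: Q2)) P -> (P != [::]) || (Q != [::]) -> False.
Proof.
move=> p1 p2 u1 u2 hP hne.
have := eac (c := x :: P ++ z :: rev Q).
have -> : (2 < size (x :: P ++ z :: rev Q))%N.
  rewrite /= size_cat /= size_rev.
  move: hne; rewrite -!size_eq0; case: (size P) => [|n]; case: (size Q) => [|m] //= _; lia.
move=> H.
have U : uniq (x :: P ++ z :: rev Q).
  rewrite cat_rcons in u1 p1.
  rewrite /= in u1 u2.
  move: u1 u2 => /andP[xn1 u1] /andP[xn2 u2].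
  rewrite cat_uniq in u1; rewrite cat_uniq in u2.
  move: u1 u2 => /and3P[uP hh1 uz1] /and3P[uQ hh2 uz2].
  rewrite /= !mem_cat !inE !mem_rev /= in xn1 xn2 uz1 uz2 *.
  rewrite cat_uniq /= rev_uniq uP uQ /=.
  rewrite /= !negb_or in hh1 hh2 xn1 xn2.
  move: hh1 hh2 xn1 xn2 => /andP[zP _] /andP[zQ _] /and3P[xP xz _] /and3P[xQ _ _].
  rewrite (negbTE zP) mem_rev (negbTE zQ) (negbTE xP) (negbTE xQ) (negbTE xz) /= andbT.
  apply/hasPn => y; rewrite mem_rev => yQ; apply/negP => yP.
  by move/hasPn: hP => /(_ y yP); rewrite /= mem_cat yQ.
have Cy : cycle e (x :: P ++ z :: rev Q).
  rewrite cat_rcons in p1.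
  rewrite /= rcons_cat /= cat_path.
  move: p1; rewrite cat_path /= => /and3P[-> -> _] /=.
  rewrite -rev_cons -[z in path _ z](last_rcons x Q z) -(belast_rcons x Q z) rev_path.
  rewrite (@eq_path _ _ e); last by move=> u v; rewrite /= esym.
  move: p2; rewrite -cats1 !cat_path /= => /andP[-> /andP[-> _]] /=.
  done.
by move: (H isT U); rewrite Cy.
Qed.
Lemma tpath_uniq x p q y : tpath e x p y -> tpath e x q y -> p = q.
Proof.
elim: p x q => [|a p IH] x [|b q] //.
- case=> _ /= xy _ [_ /= hl /andP[hx _]].
  by move: hx; rewrite xy -hl mem_last.
- case=> _ /= hl /andP[hx _] [_ /= xy _].
  by move: hx; rewrite xy -hl mem_last.
move=> [pa la ua] [pb lb ub].
have [ab|nab] := eqVneq a b.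
  subst b; congr (_ :: _); apply: (IH a).
  - split; first by move: pa => /= /andP[].
    + by [].
    + by move: ua => /= /andP[].
  - split; first by move: pb => /= /andP[].
    + by [].
    + by move: ub => /= /andP[].
exfalso.
have hy : has (mem (b :: q)) (a :: p).
  apply/hasP; exists y; first by rewrite -la /= mem_last.
  by rewrite -lb /= mem_last.
move: pa ua hy; move Epp: (a :: p) => pp.
move: pb ub; move Eqq: (b :: q) => qq pb ub pa ua hy.
case: (split_find hy) Epp pa ua => z P P2 zq hPq Epp pa ua.
case/splitPr: zq Eqq pb ub hPq => Q Q2 Eqq pb ub hPq.
apply: (cyc_contra pa pb ua ub hPq).
case: P {pa ua hPq} Epp => [|? ?] //= [az _].
case: Q {pb ub} Eqq => [|? ?] //= [bz _].
by move: nab; rewrite az bz eqxx.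
Qed.

Lemma tree_le_anti root s t : tree_le e root s t -> tree_le e root t s -> s = t.
Proof.
move=> [pt [[pt1 pt2 pt3] sin]] [ps [tps tin]].
case/splitPl: sin pt1 pt2 pt3 => p1 p2 l1 pt1 pt2 pt3.
have tp1 : tpath e root p1 s.
  split=> //; first by move: pt1; rewrite cat_path => /andP[].
  by move: pt3; rewrite -cat_cons cat_uniq => /andP[].
have E := tpath_uniq tp1 tps; rewrite -E in tin.
move: pt2; rewrite last_cat l1.
case: p2 pt3 {pt1} => [|c p2] pt3 /=; first by [].
move=> tl; move: pt3; rewrite -cat_cons cat_uniq => /and3P[_ /hasPn H _].
have := H t; rewrite -tl mem_last tl tin => /(_ isT).
by [].
Qed.

Lemma tpath_ex x y : connect e x y -> exists p, tpath e x p y.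
Proof.
case/connectP => p pp ->; case: (shortenP pp) => p' pp' up' _.
by exists p'.
Qed.

End G.

Section Cx.
Variable R : realType.

Lemma sin_lt0_pi (x : R) : pi < x < pi *+ 2 -> sin x < 0.
Proof.
move=> /andP[h1 h2].
have -> : x = (x - pi) + pi by rewrite subrK.
rewrite sinDpi oppr_lt0; apply: sin_gt0_pi.
apply/andP; split; first by rewrite subr_gt0.
by rewrite ltrBlDr -mulr2n.
Qed.

Lemma two_pi : 2 * pi = pi *+ 2 :> R.
Proof. by rewrite mulr_natl. Qed.

Lemma expi_norm (c : R) : `|expi c| = 1.
Proof.
by rewrite normc_def /expi /= cos2Dsin2 sqrtr1.
Qed.

Lemma expi_inj (a b : R) : in_I a -> in_I b -> expi a = expi b -> a = b.
Proof.
rewrite /in_I two_pi => /andP[a0 a2] /andP[b0 b2] [ca sa].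
have key : forall u v : R, 0 <= u < pi *+ 2 -> 0 <= v < pi *+ 2 ->
    sin u = sin v -> u <= pi -> v <= pi.
  move=> u v /andP[u0 u2] /andP[v0 v2] suv upi; rewrite leNgt; apply/negP => vpi.
  have : 0 <= sin u by apply: sin_ge0_pi; rewrite u0 upi.
  by rewrite suv leNgt sin_lt0_pi // vpi v2.
have [api|pia] := leP a pi.
  have bpi : b <= pi by apply: (key a b); rewrite ?a0 ?a2 ?b0 ?b2.
  by rewrite -(@cosK R a) ?in_itv /= ?a0 ?api // ca cosK // in_itv /= b0 bpi.
have pib : pi < b.
  rewrite ltNge; apply/negP => bpi.
  have : a <= pi by apply: (key b a); rewrite ?a0 ?a2 ?b0 ?b2.
  by rewrite leNgt pia.
have cc : forall u : R, cos (pi *+ 2 - u) = cos u.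
  by move=> u; rewrite addrC cosD2pi cosN.
suff : pi *+ 2 - a = pi *+ 2 - b by move/addrI/oppr_inj.
have Ha : pi *+ 2 - a \in `[0, pi].
  rewrite in_itv /=; apply/andP; split; first by rewrite subr_ge0 ltW.
  by rewrite lerBlDr -lerBlDl mulr2n addrK ltW.
have Hb : pi *+ 2 - b \in `[0, pi].
  rewrite in_itv /=; apply/andP; split; first by rewrite subr_ge0 ltW.
  by rewrite lerBlDr -lerBlDl mulr2n addrK ltW.
by rewrite -(cosK Ha) cc ca -(cc b) (cosK Hb).
Qed.

Lemma expi_surj (z : R[i]) : `|z| = 1 -> exists c, in_I c /\ expi c = z.
Proof.
move=> nz; have := add_Re2_Im2 z; rewrite nz expr1n.
case: z {nz} => a b /= [hab].
have ha : -1 <= a <= 1 by apply/andP; split; nra.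
have hs : Num.sqrt (1 - a ^+ 2) = `|b| by rewrite -hab addrC addKr sqrtr_sqr.
rewrite /in_I two_pi.
have [b0|b0] := leP 0 b.
  exists (acos a); split.
    by rewrite acos_ge0 //= (le_lt_trans (acos_lepi ha)) // mulr2n ltrDl pi_gt0.
  by rewrite /expi acosK ?in_itv //= sin_acos // hs ger0_norm.
exists (pi *+ 2 - acos a); split.
  apply/andP; split.
    by rewrite subr_ge0 (le_trans (acos_lepi ha)) // mulr2n lerDl pi_ge0.
  rewrite ltrBlDr ltrDl acos_gt0 //.
  move: ha => /andP[-> _] /=; nra.
rewrite /expi addrC cosD2pi sinD2pi cosN sinN acosK ?in_itv //= sin_acos // hs.
by rewrite ltr0_norm // opprK.
Qed.
End Cx.

Section WG.
Variables (R : realType) (V : finType).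

Lemma walk_gain_cons (phi : V -> V -> R[i]) x a p :
  walk_gain phi x (a :: p) = phi x a * walk_gain phi a p.
Proof. by rewrite /walk_gain /= big_cons. Qed.

Lemma walk_gain_1 (tr : rel V) (phi : V -> V -> R[i]) x p :
  (forall u v, tr u v -> phi u v = 1) -> path tr x p -> walk_gain phi x p = 1.
Proof.
move=> h; elim: p x => [|a p IH] x; first by rewrite /walk_gain big_nil.
by move=> /= /andP[xa pa]; rewrite walk_gain_cons h // IH // mul1r.
Qed.

Lemma walk_gain_n1 (tr : rel V) (phi : V -> V -> R[i]) x p :
  (forall u v, tr u v -> `|phi u v| = 1) -> path tr x p -> `|walk_gain phi x p| = 1.
Proof.
move=> h; elim: p x => [|a p IH] x; first by rewrite /walk_gain big_nil normr1.
by move=> /= /andP[xa pa]; rewrite walk_gain_cons normrM h // IH // mul1r.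
Qed.
End WG.

Theorem theorem3p3 (R : realType) (V : finType) (adj tr : rel V) (root : V)
  (hG : simple_graph adj) (hconn : connected_graph adj)
  (hT : spanning_tree adj tr) (hnormal : normal_tree adj tr root)
  (cyc : 'I_(cyclo_num adj) -> V * V) (cyc_inj : injective cyc)
  (cyc_onto : forall p, fund_edge adj tr root p <-> exists j, cyc j = p) :
  (* each A_T(r) is nonempty *)
  (forall r : {ffun 'I_(cyclo_num adj) -> R}, (forall j, in_I (r j)) ->
     exists phi : V -> V -> R[i], is_gain adj phi /\ in_A tr cyc phi r) /\
  (* the A_T(r) cover T_G *)
  (forall phi : V -> V -> R[i], is_gain adj phi ->
     exists r : {ffun 'I_(cyclo_num adj) -> R},
       (forall j, in_I (r j)) /\ in_A tr cyc phi r) /\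
  (* the A_T(r) are pairwise disjoint *)
  (forall (phi : V -> V -> R[i]) (r1 r2 : {ffun 'I_(cyclo_num adj) -> R}),
     (forall j, in_I (r1 j)) -> (forall j, in_I (r2 j)) ->
     is_gain adj phi -> in_A tr cyc phi r1 -> in_A tr cyc phi r2 -> r1 = r2).
Proof.
have [adjsym adjirr] := hG.
have [trsym trsub trconn trac] := hT.
have fe j : fund_edge adj tr root (cyc j) by apply/cyc_onto; exists j.
split; last split.
- move=> r hr.
  pose phi (x y : V) : R[i] :=
    if adj x y && ~~ tr x y then
      match [pick j | cyc j == (y, x)] with
      | Some j => expi (r j)
      | None => match [pick j | cyc j == (x, y)] with
                | Some j => (expi (r j))^-1
                | None => 1 end end
    else 1.
  exists phi; split; [split; [|split]|].
  + move=> s t ast; rewrite /phi ast /=; case: (tr s t) => /=; first exact: normr1.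
    case: pickP => [j _|_]; first exact: expi_norm.
    case: pickP => [j _|_]; last exact: normr1.
    by rewrite normfV expi_norm invr1.
  + move=> s t ast; rewrite /phi ast (adjsym t s) ast (trsym t s) /=.
    case: (tr s t) => /=; first by rewrite invr1.
    case: pickP => [j1 /eqP e1|n1]; case: pickP => [j2 /eqP e2|n2].
    * exfalso; have [_ _ l1] := fe j1; have [_ _ l2] := fe j2.
      rewrite e1 e2 /= in l1 l2.
      have st := tree_le_anti trsym trac l2 l1.
      by move: (adjirr s); rewrite -{2}st ast.
    * by rewrite invrK.
    * by [].
    * by rewrite invr1.
  + by move=> s t nst; rewrite /phi (negbTE nst).
  + move=> j; case E: (cyc j) (fe j) => [s t] [/= ast nts _] p tp.
    rewrite (@walk_gain_1 R V tr); last by case: tp.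
      rewrite mul1r /phi (adjsym t s) ast (trsym t s) nts /=.
      case: pickP => [j' /eqP e'|n]; first by rewrite (@cyc_inj j' j (etrans e' (esym E))).
      by move: (n j); rewrite E eqxx.
    by move=> u v tuv; rewrite /phi tuv andbF.
- move=> phi [gn [ginv g1]].
  have H : forall j, exists c, in_I c /\
      fund_cycle_gain tr phi (cyc j).1 (cyc j).2 (expi c).
    move=> j; have [ast _ _] := fe j.
    have [p tp] := tpath_ex (trconn (cyc j).1 (cyc j).2).
    have : `|walk_gain phi (cyc j).1 p * phi (cyc j).2 (cyc j).1| = 1.
      have ats : adj (cyc j).2 (cyc j).1 by rewrite adjsym.
      rewrite normrM (gn _ _ ats) mulr1; apply: (@walk_gain_n1 R V tr).
        by move=> u v /trsub; apply: gn.
      by case: tp.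
    move=> /expi_surj [c [ic ec]]; exists c; split => //.
    by move=> p' tp'; rewrite (tpath_uniq trsym trac tp' tp).
  have /fin_all_exists [f Hf] := H.
  exists (finfun f); split => j; rewrite ffunE; by case: (Hf j).
- move=> phi r1 r2 h1 h2 _ A1 A2; apply/ffunP => j.
  have [p tp] := tpath_ex (trconn (cyc j).1 (cyc j).2).
  apply: (expi_inj (h1 j) (h2 j)).
  by rewrite -(A1 j p tp) -(A2 j p tp).
Qed.
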